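(* Assume the linear payoff assumption and the rank condition $\operatorname{rank}\begin{bmatrix}A(\nu^* )\\ B(\mu^* )\end{bmatrix}=d$. Let $(a^k,b^k)$, $k=1,\dots,N$, be i.i.d. with $a^k\sim\mu^*$ and $b^k\sim\nu^*$ independent. Let $$\widehat\mu(a)=\frac1N\sum_k\mathbf 1\{a^k=a\},\qquad \widehat\nu(b)=\frac1N\sum_k\mathbf 1\{b^k=b\}$$ be the frequency estimators. Let $\widehat\theta$ be the least-squares minimizer of $$\Big\|\begin{bmatrix}A(\widehat\nu)\\ B(\widehat\mu)\end{bmatrix}\theta-\begin{bmatrix}c(\widehat\mu)\\ d(\widehat\nu)\end{bmatrix}\Big\|^2,$$ and set $\widehat Q(a,b)=\langle\phi(a,b),\widehat\theta\rangle$. Then there is a constant $C>0$, depending only on $\phi,\eta,\mu^*,\nu^*$, with the following property. For every $\delta\in(0,1)$ there is $N_0(\delta)$ such that for all $N\ge N_0(\delta)$, with probability at least $1-\delta$, $$\|\widehat Q-Q\|_F^2\le C\,\frac{m^2+n^2+(m+n)\log(1/\delta)}{N}.$$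
   Context: Let $m,n\ge 2$, $\mathcal A=\{1,\dots,m\}$, $\mathcal B=\{1,\dots,n\}$, and $\eta>0$. For a payoff matrix $Q\in\mathbb{R}^{m\times n}$, the entropy-regularized zero-sum matrix game is $$\max_{\mu\in\Delta(\mathcal A)}\min_{\nu\in\Delta(\mathcal B)}\ \mu^\top Q\nu+\eta^{-1}\mathcal H(\mu)-\eta^{-1}\mathcal H(\nu),\qquad \mathcal H(\pi)=-\sum_i\pi_i\log\pi_i .$$ Its unique saddle point, the quantal response equilibrium (QRE) $(\mu,\nu)$, is characterized by $$\mu(a)=\frac{\exp\big(\eta\sum_b Q(a,b)\nu(b)\big)}{\sum_{a'}\exp\big(\eta\sum_bQ(a',b)\nu(b)\big)},\qquad \nu(b)=\frac{\exp\big(-\eta\sum_a Q(a,b)\mu(a)\big)}{\sum_{b'}\exp\big(-\eta\sum_aQ(a,b')\mu(a)\big)}.$$ Linear payoff assumption: there are a feature map $\phi:\mathcal A\times\mathcal B\to\mathbb{R}^d$ and $\theta^*\in\mathbb{R}^d$ with $\|\theta^*\|^2\le M$ such that $Q(a,b)=\langle\phi(a,b),\theta^*\rangle$ for all $(a,b)$. $(\mu^*,\nu^* )$ denotes the QRE of this $Q$; all its entries are positive. For $\mu\in\Delta(\mathcal A)$ and $\nu\in\Delta(\mathcal B)$ with positive entries, define: - $A(\nu)\in\mathbb{R}^{(m-1)\times d}$, whose row indexed by $a=2,\dots,m$ is $\sum_{b}\nu(b)\,(\phi(a,b)-\phi(1,b))^\top$; - $B(\mu)\in\mathbb{R}^{(n-1)\times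 d}$, whose row indexed by $b=2,\dots,n$ is $\sum_a\mu(a)\,(\phi(a,b)-\phi(a,1))^\top$; - $c(\mu)=\big(\eta^{-1}\log(\mu(a)/\mu(1))\big)_{a=2}^m\in\mathbb{R}^{m-1}$; - $d(\nu)=\big(-\eta^{-1}\log(\nu(b)/\nu(1))\big)_{b=2}^n\in\mathbb{R}^{n-1}$. *)

(* Defs.v *)
From HB Require Import structures.
From mathcomp Require Import all_boot all_order all_algebra.
From mathcomp Require Import boolp reals.
From mathcomp Require Import sequences exp.
Set Implicit Arguments. Unset Strict Implicit. Unset Printing Implicit Defensive.
Import Order.TTheory GRing.Theory Num.Theory.
Local Open Scope ring_scope.

(* Action sets: A = 'I_p.+1, B = 'I_q.+1, so m = p+1, n = q+1.
   The paper's action "1" is ord0; the rows indexed a = 2..m are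
   lift ord0 i for i : 'I_p. *)

Section Defs.
Variables (R : realType) (p q d : nat).
Variable phi : 'I_p.+1 -> 'I_q.+1 -> 'rV[R]_d.

Definition Qlin (theta : 'cV[R]_d) (a : 'I_p.+1) (b : 'I_q.+1) : R :=
  \sum_(j < d) phi a b 0 j * theta j 0.

Definition Amat (nu : 'I_q.+1 -> R) : 'M[R]_(p, d) :=
  \matrix_(i < p, j < d) \sum_(b < q.+1) nu b * (phi (lift ord0 i) b 0 j - phi ord0 b 0 j).

Definition Bmat (mu : 'I_p.+1 -> R) : 'M[R]_(q, d) :=
  \matrix_(i < q, j < d) \sum_(a < p.+1) mu a * (phi a (lift ord0 i) 0 j - phi a ord0 0 j).

Definition cvec (eta : R) (mu : 'I_p.+1 -> R) : 'cV[R]_p :=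
  \col_(i < p) (eta^-1 * ln (mu (lift ord0 i) / mu ord0)).

Definition dvec (eta : R) (nu : 'I_q.+1 -> R) : 'cV[R]_q :=
  \col_(i < q) (- eta^-1 * ln (nu (lift ord0 i) / nu ord0)).

Definition sqnorm k (v : 'cV[R]_k) : R := \sum_(i < k) v i 0 ^+ 2.

Definition LSobj (eta : R) (mu : 'I_p.+1 -> R) (nu : 'I_q.+1 -> R)
  (theta : 'cV[R]_d) : R :=
  sqnorm (col_mx (Amat nu) (Bmat mu) *m theta - col_mx (cvec eta mu) (dvec eta nu)).

Definition is_LS_minimizer eta mu nu theta : Prop :=
  forall theta', LSobj eta mu nu theta <= LSobj eta mu nu theta'.

Definition frob2 (Q1 Q2 : 'I_p.+1 -> 'I_q.+1 -> R) : R :=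
  \sum_(a < p.+1) \sum_(b < q.+1) (Q1 a b - Q2 a b) ^+ 2.

End Defs.

Definition is_QRE (R : realType) (p q : nat) (eta : R)
  (Q : 'I_p.+1 -> 'I_q.+1 -> R) (mu : 'I_p.+1 -> R) (nu : 'I_q.+1 -> R) : Prop :=
  (forall a, mu a = expR (eta * \sum_b Q a b * nu b) /
                    \sum_a' expR (eta * \sum_b Q a' b * nu b)) /\
  (forall b, nu b = expR (- eta * \sum_a Q a b * mu a) /
                    \sum_b' expR (- eta * \sum_a Q a b' * mu a)).

Definition sample_prob (R : realType) (p q N : nat)
  (mu : 'I_p.+1 -> R) (nu : 'I_q.+1 -> R) (s : {ffun 'I_N -> 'I_p.+1 * 'I_q.+1}) : R :=
  \prod_(k < N) (mu (s k).1 * nu (s k).2).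

Definition Prob (R : realType) (p q N : nat)
  (mu : 'I_p.+1 -> R) (nu : 'I_q.+1 -> R)
  (E : {ffun 'I_N -> 'I_p.+1 * 'I_q.+1} -> Prop) : R :=
  \sum_(s | `[< E s >]) sample_prob mu nu s.

Definition muhat (R : realType) (p q N : nat) (s : {ffun 'I_N -> 'I_p.+1 * 'I_q.+1})
  (a : 'I_p.+1) : R := (#|[set k | (s k).1 == a]|)%:R / N%:R.
Definition nuhat (R : realType) (p q N : nat) (s : {ffun 'I_N -> 'I_p.+1 * 'I_q.+1})
  (b : 'I_q.+1) : R := (#|[set k | (s k).2 == b]|)%:R / N%:R.
Arguments muhat {R p q N} s a.
Arguments nuhat {R p q N} s b.

(* Main.v *)
Require Import Defs.
From HB Require Import structures.
From mathcomp Require Import all_boot all_order all_algebra.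
From mathcomp Require Import boolp reals.
From mathcomp Require Import sequences exp.
From mathcomp Require Import ring lra.
Import Order.TTheory GRing.Theory Num.Theory.
Local Open Scope ring_scope.

Section Gen.
Variable R : realType.
Lemma L_single (T : finType) (F : T -> R) x :
  (forall y, 0 <= F y) -> F x <= \sum_y F y.
Proof.
move=> F0; rewrite (bigD1 x) //= lerDl; exact: sumr_ge0.
Qed.

Lemma L_cs n (x : 'I_n -> R) :
  (\sum_i x i) ^+ 2 <= n%:R * \sum_i x i ^+ 2.
Proof.
rewrite expr2 mulr_suml.
apply: (@le_trans _ _ (\sum_i \sum_j ((x i ^+ 2 + x j ^+ 2) / 2))).
  apply: ler_sum => i _; rewrite mulr_sumr; apply: ler_sum => j _.
  have := sqr_ge0 (x i - x j); rewrite sqrrB mulr2n.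
  set u := x i ^+ 2; set v := x j ^+ 2; set w := x i * x j; lra.
under eq_bigr => i _ do rewrite -mulr_suml big_split /= sumr_const card_ord.
rewrite -mulr_suml big_split /= sumr_const card_ord sumrMnl.
set s0 := \sum_(i < n) _. rewrite mulr_natl. lra.
Qed.
Lemma ln_le_sub1 (x : R) : 0 < x -> ln x <= x - 1.
Proof. move=> x0; have := expR_ge1Dx (ln x); rewrite lnK ?posrE //; lra. Qed.

Lemma ln_diff_le {x y : R} : 0 < x -> 0 < y -> ln x - ln y <= (x - y) / y.
Proof.
move=> x0 y0.
have -> : ln x = ln y + ln (x / y).
  by rewrite -lnM ?posrE ?divr_gt0 // mulrC divfK // gt_eqF.
have := @ln_le_sub1 (x / y) (divr_gt0 x0 y0).
rewrite mulrBl divff ?gt_eqF //; lra.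
Qed.

Lemma ln_lip (x y m : R) : 0 < m -> m <= x -> m <= y ->
  `|ln x - ln y| <= `|x - y| / m.
Proof.
move=> m0 mx my.
have x0 : 0 < x by apply: lt_le_trans mx.
have y0 : 0 < y by apply: lt_le_trans my.
have k1 : (x - y) / y <= `|x - y| / m.
  apply: (le_trans (ler_norm _)); rewrite normrM normfV (gtr0_norm y0).
  apply: ler_wpM2l => //; rewrite lef_pV2 ?posrE //.
have k2 : (y - x) / x <= `|x - y| / m.
  apply: (le_trans (ler_norm _)); rewrite normrM normfV (gtr0_norm x0) distrC.
  apply: ler_wpM2l => //; rewrite lef_pV2 ?posrE //.
have := ln_diff_le x0 y0; have := ln_diff_le y0 x0.
rewrite ler_norml; lra.
Qed.

Lemma sqabs (x : R) : `|x| ^+ 2 = x ^+ 2.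
Proof. by rewrite real_normK ?num_real. Qed.

Lemma sq_le (x c : R) : `|x| <= c -> x ^+ 2 <= c ^+ 2.
Proof.
move=> h; rewrite -sqabs; apply: lerXn2r => //; rewrite nnegrE //.
exact: le_trans h.
Qed.

Lemma sqnormB k (u v : 'cV[R]_k) : sqnorm (u - v) <= 2 * sqnorm u + 2 * sqnorm v.
Proof.
rewrite /sqnorm !mulr_sumr -big_split /=; apply: ler_sum => i _.
rewrite !mxE; have := sqr_ge0 (u i 0 + v i 0); rewrite sqrrD sqrrB mulr2n.
set a := u i 0 ^+ 2; set b := v i 0 ^+ 2; set c := u i 0 * v i 0; lra.
Qed.

Lemma abs_sum_le n (u v : 'I_n -> R) t c :
  (forall i, `|u i| <= t) -> (forall i, `|v i| <= c) ->
  `|\sum_i u i * v i| <= n%:R * (t * c).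
Proof.
move=> hu hv; apply: (le_trans (ler_norm_sum _ _ _)).
apply: (@le_trans _ _ (\sum_(i < n) (t * c))); last by rewrite sumr_const card_ord mulr_natl.
apply: ler_sum => i _; rewrite normrM; apply: ler_pM => //.
Qed.

Lemma core k d (G G' : 'M[R]_(k, d)) (L : 'M[R]_(d, k)) (h h' : 'cV[R]_k)
  (th thh : 'cV[R]_d) (t e0 r0 La : R) :
  L *m G = 1%:M ->
  (forall i j, `|G' i j - G i j| <= t * e0) ->
  (forall i, `|(G' *m th - h') i 0| <= t * r0) ->
  (forall j i, `|L j i| <= La) ->
  0 <= t -> 0 <= e0 -> 0 <= La -> 0 <= r0 ->
  t * e0 * (d%:R * La * k%:R) <= 1/2 ->
  sqnorm (G' *m thh - h') <= sqnorm (G' *m th - h') ->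
  (\sum_j `|thh j 0 - th j 0|) ^+ 2 <= 16 * (d%:R * La) ^+ 2 * k%:R ^+ 2 * (t * r0) ^+ 2.
Proof.
move=> LG hG hr hL t0 e00 La0 r00 hc hmin.
set v := thh - th.
have vE : forall j, thh j 0 - th j 0 = v j 0 by move=> j; rewrite !mxE.
under eq_bigr do rewrite vE.
set Sv := \sum_j `|v j 0|.
have Sv0 : 0 <= Sv by apply: sumr_ge0.
have r0n : 0 <= t * r0 by apply: mulr_ge0.
have hsr : sqnorm (G' *m th - h') <= k%:R * (t * r0) ^+ 2.
  rewrite /sqnorm; apply: (@le_trans _ _ (\sum_(i < k) (t * r0) ^+ 2)).
    by apply: ler_sum => i _; apply: sq_le.
  by rewrite sumr_const card_ord mulr_natl.
have Gv : G' *m v = (G' *m thh - h') - (G' *m th - h').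
  by rewrite mulmxBr opprB addrA subrK.
have hGv : sqnorm (G' *m v) <= 4 * (k%:R * (t * r0) ^+ 2).
  rewrite Gv; apply: (le_trans (sqnormB _ _ _)).
  lra.
set Sg := \sum_i `|(G' *m v) i 0|.
have S10 : 0 <= Sg by apply: sumr_ge0.
have hS1 : Sg ^+ 2 <= k%:R * (4 * (k%:R * (t * r0) ^+ 2)).
  apply: (le_trans (L_cs _ (fun i => `|(G' *m v) i 0|))); apply: ler_wpM2l => //.
  by under eq_bigr do rewrite sqabs.
have hGvi : forall i, `|(G *m v) i 0| <= `|(G' *m v) i 0| + t * e0 * Sv.
  move=> i.
  have -> : G *m v = G' *m v - (G' - G) *m v by rewrite mulmxBl opprB addrC subrK.
  rewrite [(G' *m v - _) i 0]mxE; apply: (le_trans (ler_normD _ _)).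
  rewrite lerD2l [(- ((G' - G) *m v)) i 0]mxE normrN mxE /Sv mulr_sumr; apply: (le_trans (ler_norm_sum _ _ _)).
  apply: ler_sum => j _; rewrite normrM; apply: ler_wpM2r => //; rewrite !mxE; exact: hG.
have hvj : forall j, `|v j 0| <= La * (Sg + k%:R * (t * e0 * Sv)).
  move=> j.
  have -> : v j 0 = (L *m (G *m v)) j 0 by rewrite mulmxA LG mul1mx.
  rewrite mxE; apply: (le_trans (ler_norm_sum _ _ _)).
  apply: (@le_trans _ _ (\sum_i La * (`|(G' *m v) i 0| + t * e0 * Sv))).
    apply: ler_sum => i _; rewrite normrM; apply: ler_pM => //.
  by rewrite -mulr_sumr big_split /= sumr_const card_ord mulr_natl.
have hS : Sv <= d%:R * (La * (Sg + k%:R * (t * e0 * Sv))).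
  apply: (@le_trans _ _ (\sum_(j < d) (La * (Sg + k%:R * (t * e0 * Sv))))).
    by apply: ler_sum => j _; apply: hvj.
  by rewrite sumr_const card_ord [d%:R * _]mulr_natl.
have hS2 : Sv <= 2 * (d%:R * La) * Sg.
  move: hS hc; set c := t * e0 * (d%:R * La * k%:R).
  have -> : d%:R * (La * (Sg + k%:R * (t * e0 * Sv))) = d%:R * La * Sg + c * Sv.
    by rewrite /c; ring.
  set D := d%:R * La; move=> h1 h2; nra.
have D0 : 0 <= d%:R * La by apply: mulr_ge0.
have h3 : Sv ^+ 2 <= (2 * (d%:R * La) * Sg) ^+ 2 by apply: sq_le; rewrite ger0_norm.
apply: (le_trans h3).
have -> : (2 * (d%:R * La) * Sg) ^+ 2 = 4 * (d%:R * La) ^+ 2 * Sg ^+ 2 by ring.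
have -> : 16 * (d%:R * La) ^+ 2 * k%:R ^+ 2 * (t * r0) ^+ 2
   = 4 * (d%:R * La) ^+ 2 * (k%:R * (4 * (k%:R * (t * r0) ^+ 2)))  by ring.
apply: ler_wpM2l => //; apply: mulr_ge0 => //; exact: sqr_ge0.
Qed.
Lemma lnD (x y : R) : 0 < x -> 0 < y -> ln (x / y) = ln x - ln y.
Proof. by move=> x0 y0; rewrite lnM ?posrE ?invr_gt0 // lnV ?posrE. Qed.

Lemma colmx_bound m1 m2 n (A A' : 'M[R]_(m1, n)) (B B' : 'M[R]_(m2, n)) c :
  (forall i j, `|A' i j - A i j| <= c) -> (forall i j, `|B' i j - B i j| <= c) ->
  forall i j, `|col_mx A' B' i j - col_mx A B i j| <= c.
Proof.
move=> hA hB i j; rewrite -(splitK i); case: (split i) => k /=.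
  by rewrite !col_mxEu.
by rewrite !col_mxEd.
Qed.

Lemma r_bound k d (G G' : 'M[R]_(k, d)) (h h' : 'cV[R]_k) th (a b Th : R) :
  G *m th = h -> (forall i j, `|G' i j - G i j| <= a) ->
  (forall i, `|h' i 0 - h i 0| <= b) -> (forall j, `|th j 0| <= Th) ->
  forall i, `|(G' *m th - h') i 0| <= d%:R * (a * Th) + b.
Proof.
move=> hG hGG hh hth i.
have -> : G' *m th - h' = (G' - G) *m th - (h' - h).
  by rewrite mulmxBl -hG opprB addrA subrK.
rewrite mxE; apply: (le_trans (ler_normD _ _)).
rewrite [(- (h' - h)) i 0]mxE normrN; apply: lerD.
  rewrite mxE; apply: abs_sum_le => j; last exact: hth.
  by rewrite !mxE; apply: hGG.
by rewrite !mxE; apply: hh.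
Qed.

Lemma expR_quad (y : R) : `|y| <= 1/2 -> expR y <= 1 + y + 2 * y ^+ 2.
Proof.
rewrite ler_norml => /andP[y1 y2].
have h := expR_ge1Dx (-y).
have e0 : 0 < expR y := expR_gt0 y.
have ee : expR y * expR (- y) = 1 by rewrite -expRD subrr expR0.
have k1 : expR y * (1 - y) <= 1.
  rewrite -ee; apply: ler_wpM2l; [exact: ltW | lra].
have k2 : 1 <= (1 + y + 2 * y ^+ 2) * (1 - y).
  have : 0 <= y ^+ 2 * (1 - 2 * y) by apply: mulr_ge0; [exact: sqr_ge0 | lra].
  rewrite !expr2; nra.
rewrite -(ler_pM2r (_ : 0 < 1 - y)); [lra | lra].
Qed.


Section Prob.
Variables (p q : nat) (mu : 'I_p.+1 -> R) (nu : 'I_q.+1 -> R).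
Local Notation W := ('I_p.+1 * 'I_q.+1)%type.
Local Notation w1 x := (mu x.1 * nu x.2).

Lemma sum_prod_ffun N (F : W -> R) :
  \sum_(s : {ffun 'I_N -> W}) \prod_k F (s k) = (\sum_x F x) ^+ N.
Proof. by rewrite -(bigA_distr_bigA (fun (k : 'I_N) (x : W) => F x)) /= prodr_const card_ord. Qed.

Lemma Prob_mk N (E : {ffun 'I_N -> W} -> Prop) :
  Prob mu nu E = \sum_s (if `[< E s >] then sample_prob mu nu s else 0).
Proof. by rewrite /Prob big_mkcond. Qed.

Hypothesis w0 : forall x : W, 0 <= w1 x.
Hypothesis w1s : \sum_(x : W) w1 x = 1.

Lemma sp_ge0 N (s : {ffun 'I_N -> W}) : 0 <= sample_prob mu nu s.
Proof. by apply: prodr_ge0 => k _. Qed.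

Lemma sp_sum N : \sum_(s : {ffun 'I_N -> W}) sample_prob mu nu s = 1.
Proof. by rewrite /sample_prob (sum_prod_ffun N (fun x : W => w1 x)) w1s expr1n. Qed.

Lemma Prob_union N (I : finType) (B : I -> {ffun 'I_N -> W} -> Prop)
  (E : {ffun 'I_N -> W} -> Prop) :
  (forall s, (forall i, ~ B i s) -> E s) ->
  1 - \sum_i Prob mu nu (B i) <= Prob mu nu E.
Proof.
move=> HE.
under eq_bigr => i _ do rewrite Prob_mk.
rewrite Prob_mk exchange_big /= -(sp_sum N) -sumrB.
apply: ler_sum => s _.
case: (pselect (E s)) => Es.
  rewrite asboolT // lerBlDr lerDl; apply: sumr_ge0 => i _.
  by case: ifP => // _; apply: sp_ge0.
rewrite asboolF //.
have [i Bi] : exists i, B i s.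
  apply: contra_notP Es => nB; apply: HE => i Bi; apply: nB; by exists i.
rewrite subr_le0 (bigD1 i) //= asboolT // lerDl.
apply: sumr_ge0 => j _; by case: ifP => // _; apply: sp_ge0.
Qed.


Lemma chernoff N (Y : W -> R) t :
  (forall x, `|Y x| <= 1) -> \sum_x w1 x * Y x = 0 -> 0 <= t <= 2 ->
  Prob mu nu (fun s : {ffun 'I_N -> W} => N%:R * t < \sum_k Y (s k))
    <= expR (- (N%:R * t ^+ 2) / 8).
Proof.
move=> Y1 Y0 /andP[t0 t2].
set l := t / 4.
have l0 : 0 <= l by rewrite /l; lra.
rewrite Prob_mk.
apply: (@le_trans _ _ (\sum_(s : {ffun 'I_N -> W})
   (expR (- (l * (N%:R * t))) * \prod_k (w1 (s k) * expR (l * Y (s k)))))).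
  apply: ler_sum => s _.
  have -> : expR (- (l * (N%:R * t))) * \prod_k (w1 (s k) * expR (l * Y (s k)))
     = sample_prob mu nu s * expR (l * \sum_k Y (s k) - l * (N%:R * t)).
    rewrite big_split /= -expR_sum mulr_sumr expRD /sample_prob.
    by rewrite mulrC -mulrA [expR _ * expR _]mulrC.
  case: (pselect (N%:R * t < \sum_k Y (s k))) => B.
    rewrite asboolT // ler_peMr ?sp_ge0 //.
    apply: le_trans (expR_ge1Dx _). rewrite lerDl subr_ge0.
    apply: ler_wpM2l => //; exact: ltW.
  by rewrite asboolF // mulr_ge0 ?sp_ge0 ?expR_ge0.
rewrite -mulr_sumr (sum_prod_ffun N (fun x => w1 x * expR (l * Y x))).
have hs : \sum_x w1 x * expR (l * Y x) <= expR (2 * l ^+ 2).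
  apply: (@le_trans _ _ (\sum_x (w1 x + l * (w1 x * Y x) + (2 * l ^+ 2) * w1 x))).
    apply: ler_sum => x _.
    have -> : w1 x + l * (w1 x * Y x) + (2 * l ^+ 2) * w1 x
       = w1 x * (1 + l * Y x + 2 * l ^+ 2) by ring.
    apply: ler_wpM2l; first exact: w0.
    have hY := Y1 x.
    have hlY : `|l * Y x| <= l by rewrite normrM (ger0_norm l0) ler_piMr.
    apply: (le_trans (expR_quad (l * Y x) _)); first by rewrite /l in hlY *; lra.
    rewrite lerD2l ler_wpM2l // exprMn ler_piMr ?sqr_ge0 //.
    by rewrite -real_normK ?num_real // expr_le1.
  rewrite !big_split /= -mulr_sumr -mulr_sumr Y0 w1s mulr0 addr0 mulr1.
  by apply: le_trans (expR_ge1Dx _).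
apply: (@le_trans _ _ (expR (- (l * (N%:R * t))) * expR (2 * l ^+ 2) ^+ N)).
  apply: ler_wpM2l; first exact: expR_ge0.
  apply: lerXn2r => //; rewrite nnegrE //.
  by apply: sumr_ge0 => x _; apply: mulr_ge0; [exact: w0 | exact: expR_ge0].
  exact: expR_ge0.
rewrite -expRM_natl -expRD.
have -> : - (l * (N%:R * t)) + N%:R * (2 * l ^+ 2) = - (N%:R * t ^+ 2) / 8
  by rewrite /l; field.
by [].
Qed.

End Prob.

Section Model.
Lemma swap_sum (I : finType) d (w : I -> R) (X Y : I -> 'I_d -> R) (th : 'I_d -> R) :
  \sum_j (\sum_b w b * (X b j - Y b j)) * th j
  = \sum_b (\sum_j X b j * th j) * w b - \sum_b (\sum_j Y b j * th j) * w b.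
Proof.
under eq_bigr do rewrite mulr_suml.
rewrite exchange_big -sumrB; apply: eq_bigr => b _.
rewrite !mulr_suml -sumrB; apply: eq_bigr => j _; ring.
Qed.

Variables (p q d : nat) (phi : 'I_p.+1 -> 'I_q.+1 -> 'rV[R]_d) (eta : R).
Hypothesis eta0 : 0 < eta.

Definition Phi0 := \sum_(x : 'I_p.+1 * 'I_q.+1 * 'I_d) `|phi x.1.1 x.1.2 0 x.2|.

Lemma phi_le a b j : `|phi a b 0 j| <= Phi0.
Proof. rewrite /Phi0. have H := @L_single _ (fun x : 'I_p.+1 * 'I_q.+1 * 'I_d => `|phi x.1.1 x.1.2 0 x.2|) (a, b, j). apply: H => y. exact: normr_ge0. Qed.

Lemma phiB_le a b a' b' j : `|phi a b 0 j - phi a' b' 0 j| <= 2 * Phi0.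
Proof.
apply: (le_trans (ler_normB _ _)); have := phi_le a b j; have := phi_le a' b' j; lra.
Qed.

Lemma A_pert (nu nu' : 'I_q.+1 -> R) t : (forall b, `|nu' b - nu b| <= t) ->
  forall i j, `|Amat phi nu' i j - Amat phi nu i j| <= (q.+1)%:R * (t * (2 * Phi0)).
Proof.
move=> hn i j; rewrite !mxE -sumrB.
under eq_bigr do rewrite -mulrBl.
apply: abs_sum_le => b //; exact: phiB_le.
Qed.

Lemma B_pert (mu mu' : 'I_p.+1 -> R) t : (forall a, `|mu' a - mu a| <= t) ->
  forall i j, `|Bmat phi mu' i j - Bmat phi mu i j| <= (p.+1)%:R * (t * (2 * Phi0)).
Proof.
move=> hn i j; rewrite !mxE -sumrB.
under eq_bigr do rewrite -mulrBl.
apply: abs_sum_le => b //; exact: phiB_le.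
Qed.

Lemma ln_ratio_pert (x x' y y' m t : R) : 0 < m ->
  m <= x -> m <= x' -> m <= y -> m <= y' -> `|x' - x| <= t -> `|y' - y| <= t ->
  `|ln (x' / y') - ln (x / y)| <= 2 * (t / m).
Proof.
move=> m0 hx hx' hy hy' htx hty.
have p0 : forall z, m <= z -> 0 < z by move=> z hz; apply: lt_le_trans hz.
rewrite !lnD ?p0 //.
have -> : ln x' - ln y' - (ln x - ln y) = (ln x' - ln x) - (ln y' - ln y) by ring.
apply: (le_trans (ler_normB _ _)).
have k1 := @ln_lip x' x m m0 hx' hx; have k2 := @ln_lip y' y m m0 hy' hy.
have l1 : `|x' - x| / m <= t / m by rewrite ler_pM2r ?invr_gt0.
have l2 : `|y' - y| / m <= t / m by rewrite ler_pM2r ?invr_gt0.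
lra.
Qed.

Lemma c_pert (mu mu' : 'I_p.+1 -> R) (m t : R) : 0 < m ->
  (forall a, m <= mu a) -> (forall a, m <= mu' a) -> (forall a, `|mu' a - mu a| <= t) ->
  forall i, `|cvec eta mu' i 0 - cvec eta mu i 0| <= eta^-1 * (2 * (t / m)).
Proof.
move=> m0 h1 h2 h3 i; rewrite !mxE -mulrBr normrM (gtr0_norm (_ : 0 < eta^-1)) ?invr_gt0 //.
by apply: ler_wpM2l; [rewrite invr_ge0 ltW | apply: ln_ratio_pert].
Qed.

Lemma d_pert (nu nu' : 'I_q.+1 -> R) (m t : R) : 0 < m ->
  (forall a, m <= nu a) -> (forall a, m <= nu' a) -> (forall a, `|nu' a - nu a| <= t) ->
  forall i, `|dvec eta nu' i 0 - dvec eta nu i 0| <= eta^-1 * (2 * (t / m)).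
Proof.
move=> m0 h1 h2 h3 i; rewrite !mxE -mulrBr normrM normrN (gtr0_norm (_ : 0 < eta^-1)) ?invr_gt0 //.
by apply: ler_wpM2l; [rewrite invr_ge0 ltW | apply: ln_ratio_pert].
Qed.

Lemma frob_bound (th thh : 'cV[R]_d) :
  frob2 (Qlin phi thh) (Qlin phi th) <=
  (p.+1)%:R * ((q.+1)%:R * (Phi0 * \sum_j `|thh j 0 - th j 0|) ^+ 2).
Proof.
rewrite /frob2.
apply: (@le_trans _ _ (\sum_(a < p.+1) \sum_(b < q.+1) (Phi0 * \sum_j `|thh j 0 - th j 0|) ^+ 2)).
  apply: ler_sum => a _; apply: ler_sum => b _; apply: sq_le.
  rewrite /Qlin -sumrB; under eq_bigr do rewrite -mulrBr.
  apply: (le_trans (ler_norm_sum _ _ _)); rewrite mulr_sumr; apply: ler_sum => j _.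
  rewrite normrM; apply: ler_wpM2r => //; exact: phi_le.
by rewrite !sumr_const !card_ord !mulr_natl.
Qed.
Lemma QRE_A {th mu nu} : is_QRE eta (Qlin phi th) mu nu ->
  Amat phi nu *m th = cvec eta mu.
Proof.
move=> [hmu _]; apply/matrixP => i j; rewrite (ord1 j) !mxE.
set Sf := fun a => \sum_b Qlin phi th a b * nu b.
have -> : \sum_j0 Amat phi nu i j0 * th j0 0 = Sf (lift ord0 i) - Sf ord0.
  rewrite /Sf /Qlin -swap_sum; apply: eq_bigr => j0 _; by rewrite mxE.
set Z := \sum_a' expR (eta * \sum_b Qlin phi th a' b * nu b).
have Z0 : 0 < Z.
  rewrite /Z (bigD1 ord0) //=; apply: ltr_pwDl; first exact: expR_gt0.
  by apply: sumr_ge0 => a _; exact: expR_ge0.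
have -> : mu (lift ord0 i) / mu ord0 = expR (eta * (Sf (lift ord0 i) - Sf ord0)).
  rewrite !hmu -/Z mulrBr expRD expRN /Sf.
  have := expR_gt0 (eta * \sum_b Qlin phi th ord0 b * nu b).
  set y := expR _ => y0.
  field; apply/andP; split; by rewrite gt_eqF.
by rewrite expRK mulKf // gt_eqF.
Qed.

Lemma QRE_B {th mu nu} : is_QRE eta (Qlin phi th) mu nu ->
  Bmat phi mu *m th = dvec eta nu.
Proof.
move=> [_ hnu]; apply/matrixP => i j; rewrite (ord1 j) !mxE.
set Tf := fun b => \sum_a Qlin phi th a b * mu a.
have -> : \sum_j0 Bmat phi mu i j0 * th j0 0 = Tf (lift ord0 i) - Tf ord0.
  rewrite /Tf /Qlin -swap_sum; apply: eq_bigr => j0 _; by rewrite mxE.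
set Z := \sum_b' expR (- eta * \sum_a Qlin phi th a b' * mu a).
have Z0 : 0 < Z.
  rewrite /Z (bigD1 ord0) //=; apply: ltr_pwDl; first exact: expR_gt0.
  by apply: sumr_ge0 => a _; exact: expR_ge0.
have -> : nu (lift ord0 i) / nu ord0 = expR (- eta * (Tf (lift ord0 i) - Tf ord0)).
  rewrite !hnu -/Z mulrBr expRD expRN /Tf.
  have := expR_gt0 (- eta * \sum_a Qlin phi th a ord0 * mu a).
  set y := expR (- eta * \sum_a Qlin phi th a ord0 * mu a) => y0.
  field; apply/andP; split; by rewrite gt_eqF.
rewrite expRK; field; by rewrite gt_eqF.
Qed.
Lemma QRE_pos {th mu nu} : is_QRE eta (Qlin phi th) mu nu ->
  (forall a, 0 < mu a) /\ (forall b, 0 < nu b) /\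
  \sum_a mu a = 1 /\ \sum_b nu b = 1.
Proof.
move=> [hmu hnu].
set Z1 := \sum_a' expR (eta * \sum_b Qlin phi th a' b * nu b).
set Z2 := \sum_b' expR (- eta * \sum_a Qlin phi th a b' * mu a).
have Z10 : 0 < Z1.
  rewrite /Z1 (bigD1 ord0) //=; apply: ltr_pwDl; first exact: expR_gt0.
  by apply: sumr_ge0 => a _; exact: expR_ge0.
have Z20 : 0 < Z2.
  rewrite /Z2 (bigD1 ord0) //=; apply: ltr_pwDl; first exact: expR_gt0.
  by apply: sumr_ge0 => a _; exact: expR_ge0.
split; [move=> a; rewrite hmu; apply: divr_gt0 => //; exact: expR_gt0|].
split; [move=> b; rewrite hnu; apply: divr_gt0 => //; exact: expR_gt0|].
split.
  under eq_bigr do rewrite hmu.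
  by rewrite -mulr_suml -/Z1 divff // gt_eqF.
under eq_bigr do rewrite hnu.
by rewrite -mulr_suml -/Z2 divff // gt_eqF.
Qed.

Lemma det th (mu : 'I_p.+1 -> R) (nu : 'I_q.+1 -> R) :
  is_QRE eta (Qlin phi th) mu nu ->
  \rank (col_mx (Amat phi nu) (Bmat phi mu)) = d ->
  exists tau K : R, 0 < tau /\ 0 <= K /\
   forall (t : R) (mu' : 'I_p.+1 -> R) (nu' : 'I_q.+1 -> R), 0 <= t <= tau ->
   (forall a, `|mu' a - mu a| <= t) -> (forall b, `|nu' b - nu b| <= t) ->
   (forall a, 0 < mu' a) /\ (forall b, 0 < nu' b) /\
   forall thh, is_LS_minimizer phi eta mu' nu' thh ->
     frob2 (Qlin phi thh) (Qlin phi th) <= K * t ^+ 2.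
Proof.
move=> hQ hrk.
have [mu0 [nu0 _]] := QRE_pos hQ.
set G := col_mx (Amat phi nu) (Bmat phi mu).
have : row_full G by rewrite -col_leq_rank hrk.
move=> /row_fullP [L hL].
set mm := (\sum_a (mu a)^-1 + \sum_b (nu b)^-1)^-1.
have T0 : 0 < \sum_a (mu a)^-1 + \sum_b (nu b)^-1.
  apply: ltr_pwDl; last by apply: sumr_ge0 => b _; rewrite invr_ge0 ltW.
  rewrite (bigD1 ord0) //=; apply: ltr_pwDl; first by rewrite invr_gt0.
  by apply: sumr_ge0 => a _; rewrite invr_ge0 ltW.
have mm0 : 0 < mm by rewrite invr_gt0.
have mm_mu : forall a, mm <= mu a.
  move=> a; rewrite -[mu a]invrK lef_pV2 ?posrE ?invr_gt0 //.
  have H := @L_single _ (fun a => (mu a)^-1) a.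
  apply: (le_trans (H _)); first by move=> y; rewrite invr_ge0 ltW.
  by rewrite lerDl; apply: sumr_ge0 => b _; rewrite invr_ge0 ltW.
have mm_nu : forall b, mm <= nu b.
  move=> b; rewrite -[nu b]invrK lef_pV2 ?posrE ?invr_gt0 //.
  have H := @L_single _ (fun b => (nu b)^-1) b.
  apply: (le_trans (H _)); first by move=> y; rewrite invr_ge0 ltW.
  by rewrite lerDr; apply: sumr_ge0 => a _; rewrite invr_ge0 ltW.
set La := \sum_(x : 'I_d * 'I_(p + q)) `|L x.1 x.2|.
have hLa : forall j i, `|L j i| <= La.
  move=> j i; have H := @L_single _ (fun x : 'I_d * 'I_(p + q) => `|L x.1 x.2|) (j, i).
  by apply: H.
have La0 : 0 <= La by apply: sumr_ge0.
set Th := \sum_j `|th j 0|.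
have hTh : forall j, `|th j 0| <= Th.
  by move=> j; have H := @L_single _ (fun j => `|th j 0|) j; apply: H.
have Th0 : 0 <= Th by apply: sumr_ge0.
have Phi00 : 0 <= Phi0 by apply: sumr_ge0.
set e0 := ((p.+1)%:R + (q.+1)%:R) * (2 * Phi0).
have e00 : 0 <= e0 by apply: mulr_ge0; [apply: addr_ge0|apply: mulr_ge0].
set hm := mm / 2.
have hm0 : 0 < hm by rewrite /hm; lra.
set r0 := d%:R * e0 * Th + eta^-1 * 2 / hm.
have r00 : 0 <= r0.
  apply: addr_ge0; first by apply: mulr_ge0 => //; apply: mulr_ge0 => //; exact: ler0n.
  by apply: mulr_ge0; [apply: mulr_ge0; [rewrite invr_ge0 ltW|]|rewrite invr_ge0 ltW].
set X := e0 * (d%:R * La * (p + q)%:R).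
have X0 : 0 <= X by apply: mulr_ge0 => //; apply: mulr_ge0 => //; apply: mulr_ge0.
exists (Num.min hm (1 / (2 * X + 2))).
exists ((p.+1)%:R * ((q.+1)%:R * (Phi0 ^+ 2 * (16 * (d%:R * La) ^+ 2 * (p + q)%:R ^+ 2 * r0 ^+ 2)))).
split.
  rewrite lt_min hm0 /=; apply: divr_gt0 => //; lra.
split.
  apply: mulr_ge0 => //; apply: mulr_ge0 => //; apply: mulr_ge0; first exact: sqr_ge0.
  apply: mulr_ge0; last exact: sqr_ge0.
  by apply: mulr_ge0; [apply: mulr_ge0; [lra|exact: sqr_ge0]|exact: sqr_ge0].
move=> t mu' nu' /andP[t0]; rewrite le_min => /andP[thm tX] hmu hnu.
have hmu' : forall a, hm <= mu' a.
  move=> a; have := hmu a; rewrite ler_norml => /andP[h1 _].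
  have := mm_mu a; rewrite /hm in thm *; lra.
have hnu' : forall b, hm <= nu' b.
  move=> b; have := hnu b; rewrite ler_norml => /andP[h1 _].
  have := mm_nu b; rewrite /hm in thm *; lra.
have hmu2 : forall a, hm <= mu a by move=> a; have := mm_mu a; rewrite /hm; lra.
have hnu2 : forall b, hm <= nu b by move=> b; have := mm_nu b; rewrite /hm; lra.
split; first by move=> a; apply: lt_le_trans (hmu' a).
split; first by move=> b; apply: lt_le_trans (hnu' b).
move=> thh hmin.
set G' := col_mx (Amat phi nu') (Bmat phi mu').
set h' := col_mx (cvec eta mu') (dvec eta nu').
have hGG : forall i j, `|G' i j - G i j| <= t * e0.
  apply: colmx_bound => i j.
    apply: (le_trans (@A_pert nu nu' t hnu i j)); rewrite /e0.
    have : 0 <= (p.+1)%:R * (2 * Phi0) * t by apply: mulr_ge0 => //; apply: mulr_ge0; [exact: ler0n | apply: mulr_ge0 => //; exact: ler0n].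
    move=> hh; set P := (p.+1)%:R; set Q := (q.+1)%:R; set F := 2 * Phi0.
    have -> : Q * (t * F) = t * (Q * F) by ring.
    have -> : t * ((P + Q) * F) = t * (Q * F) + P * F * t by ring.
    by rewrite lerDl.
  apply: (le_trans (@B_pert mu mu' t hmu i j)); rewrite /e0.
  have : 0 <= (q.+1)%:R * (2 * Phi0) * t by apply: mulr_ge0 => //; apply: mulr_ge0; [exact: ler0n | apply: mulr_ge0 => //; exact: ler0n].
  move=> hh; set P := (p.+1)%:R; set Q := (q.+1)%:R; set F := 2 * Phi0.
  have -> : P * (t * F) = t * (P * F) by ring.
  have -> : t * ((P + Q) * F) = t * (P * F) + Q * F * t by ring.
  by rewrite lerDl.
have hGth : G *m th = col_mx (cvec eta mu) (dvec eta nu).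
  by rewrite /G mul_col_mx (QRE_A hQ) (QRE_B hQ).
have hhh : forall i, `|h' i 0 - col_mx (cvec eta mu) (dvec eta nu) i 0| <= eta^-1 * (2 * (t / hm)).
  move=> i; have := @colmx_bound _ _ _ (cvec eta mu) (cvec eta mu') (dvec eta nu) (dvec eta nu')
    (eta^-1 * (2 * (t / hm))).
  apply => i' j'; rewrite (ord1 j').
    exact: c_pert.
  exact: d_pert.
have hr := @r_bound (p + q) d G G' _ h' th (t * e0) (eta^-1 * (2 * (t / hm))) Th hGth hGG hhh hTh.
have hr' : forall i, `|(G' *m th - h') i 0| <= t * r0.
  move=> i; apply: (le_trans (hr i)).
  suff -> : t * r0 = d%:R * (t * e0 * Th) + eta^-1 * (2 * (t / hm)) by [].
  by rewrite /r0; ring.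
have hc : t * e0 * (d%:R * La * (p + q)%:R) <= 1/2.
  have h2 : 0 < 2 * X + 2 by lra.
  move: tX; rewrite ler_pdivlMr // => tX.
  rewrite -mulrA -/X.
  have e : t * (2 * X + 2) = 2 * (t * X) + 2 * t by ring.
  rewrite e in tX.
  lra.
have hcore := @core (p + q) d G G' L _ h' th thh t e0 r0 La hL hGG hr' hLa t0 e00 La0 r00 hc (hmin th).
apply: (le_trans (frob_bound th thh)).
set Sv := \sum_j `|thh j 0 - th j 0|.
set K0 := 16 * (d%:R * La) ^+ 2 * (p + q)%:R ^+ 2.
have -> : (p.+1)%:R * ((q.+1)%:R * (Phi0 ^+ 2 * (K0 * r0 ^+ 2))) * t ^+ 2
  = (p.+1)%:R * ((q.+1)%:R * (Phi0 ^+ 2 * (K0 * (t * r0) ^+ 2))) by ring.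
apply: ler_wpM2l => //; apply: ler_wpM2l => //.
rewrite exprMn; apply: ler_wpM2l; [exact: sqr_ge0 | exact: hcore].
Qed.
End Model.

End Gen.

Section Final.
Variable R : realType.
Variables (p q : nat) (mu : 'I_p.+1 -> R) (nu : 'I_q.+1 -> R).
Local Notation W := ('I_p.+1 * 'I_q.+1)%type.

Lemma sumW (F : W -> R) : \sum_(x : W) F x = \sum_a \sum_b F (a, b).
Proof. by rewrite pair_bigA /=; apply: eq_bigr => -[a b]. Qed.

Lemma marg1 (f : 'I_p.+1 -> R) : \sum_b nu b = 1 ->
  \sum_(x : W) mu x.1 * nu x.2 * f x.1 = \sum_a mu a * f a.
Proof.
move=> hn; rewrite sumW; apply: eq_bigr => a _ /=.
rewrite -[RHS]mul1r -hn mulr_suml; apply: eq_bigr => b _; ring.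
Qed.

Lemma marg2 (f : 'I_q.+1 -> R) : \sum_a mu a = 1 ->
  \sum_(x : W) mu x.1 * nu x.2 * f x.2 = \sum_b nu b * f b.
Proof.
move=> hm; rewrite sumW exchange_big; apply: eq_bigr => b _ /=.
rewrite -[RHS]mul1r -hm mulr_suml; apply: eq_bigr => a _; ring.
Qed.

Lemma ind_sum (T : finType) (P : pred T) (g : T -> R) :
  \sum_a g a * (P a)%:R = \sum_(a | P a) g a.
Proof.
rewrite [RHS]big_mkcond; apply: eq_bigr => a _; case: (P a) => /=; ring.
Qed.

Lemma card_setR N (P : pred 'I_N) : (#|[set k | P k]|)%:R = \sum_k ((P k)%:R : R).
Proof.
rewrite -sum1_card natr_sum big_mkcond /=; apply: eq_bigr => k _.
by rewrite inE; case: (P k).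
Qed.

Lemma mean0_1 (a : 'I_p.+1) : \sum_b nu b = 1 -> \sum_a mu a = 1 ->
  \sum_(x : W) mu x.1 * nu x.2 * ((x.1 == a)%:R - mu a) = 0.
Proof.
move=> hn hm; rewrite (marg1 (fun a' => (a' == a)%:R - mu a)) //.
under eq_bigr do rewrite mulrBr.
rewrite sumrB ind_sum big_pred1_eq -mulr_suml hm; ring.
Qed.

Lemma mean0_2 (b : 'I_q.+1) : \sum_b nu b = 1 -> \sum_a mu a = 1 ->
  \sum_(x : W) mu x.1 * nu x.2 * ((x.2 == b)%:R - nu b) = 0.
Proof.
move=> hn hm; rewrite (marg2 (fun b' => (b' == b)%:R - nu b)) //.
under eq_bigr do rewrite mulrBr.
rewrite sumrB ind_sum big_pred1_eq -mulr_suml hn; ring.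
Qed.

Definition Yf (i : ('I_p.+1 + 'I_q.+1) * bool) (x : W) : R :=
  (if i.2 then 1 else -1) *
  (match i.1 with inl a => (x.1 == a)%:R - mu a | inr b => (x.2 == b)%:R - nu b end).

Lemma Yf_bound i x : (forall a, 0 <= mu a <= 1) -> (forall b, 0 <= nu b <= 1) ->
  `|Yf i x| <= 1.
Proof.
move=> hm hn; rewrite /Yf normrM.
have -> : `|(if i.2 then 1 else -1) : R| = 1 by case: i.2; rewrite ?normrN normr1.
rewrite mul1r; case: i.1 => [a|b].
  have := hm a; case: (x.1 == a) => /= /andP[h1 h2]; rewrite ler_norml; lra.
have := hn b; case: (x.2 == b) => /= /andP[h1 h2]; rewrite ler_norml; lra.
Qed.

Lemma Yf_mean i : \sum_b nu b = 1 -> \sum_a mu a = 1 ->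
  \sum_(x : W) mu x.1 * nu x.2 * Yf i x = 0.
Proof.
move=> hn hm; rewrite /Yf.
under eq_bigr do rewrite mulrCA.
rewrite -mulr_sumr; case: i.1 => [a|b].
  by rewrite mean0_1 // mulr0.
by rewrite mean0_2 // mulr0.
Qed.

Lemma sumY1 N (s : {ffun 'I_N -> W}) a (b : bool) : (0 < N)%N ->
  \sum_k Yf (inl a, b) (s k) = (if b then 1 else -1) * (N%:R * (muhat s a - mu a)).
Proof.
move=> N0; rewrite /Yf /= -mulr_sumr; congr (_ * _).
rewrite sumrB sumr_const card_ord /muhat card_setR mulrBr mulrC divfK ?pnatr_eq0 -?lt0n //.
by rewrite mulr_natl.
Qed.

Lemma sumY2 N (s : {ffun 'I_N -> W}) c (b : bool) : (0 < N)%N ->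
  \sum_k Yf (inr c, b) (s k) = (if b then 1 else -1) * (N%:R * (nuhat s c - nu c)).
Proof.
move=> N0; rewrite /Yf /= -mulr_sumr; congr (_ * _).
rewrite sumrB sumr_const card_ord /nuhat card_setR mulrBr mulrC divfK ?pnatr_eq0 -?lt0n //.
by rewrite mulr_natl.
Qed.

Lemma abs_from_sums (x t : R) (N : nat) : (0 < N)%N ->
  ~ (N%:R * t < 1 * (N%:R * x)) -> ~ (N%:R * t < -1 * (N%:R * x)) -> `|x| <= t.
Proof.
move=> N0 h1 h2; rewrite mul1r in h1; rewrite mulN1r in h2.
have Np : 0 < (N%:R : R) by rewrite ltr0n.
move/negP: h1; rewrite -leNgt => h1; move/negP: h2; rewrite -leNgt => h2.
rewrite ler_pM2l // in h1.
have : N%:R * (- x) <= N%:R * t by rewrite mulrN.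
rewrite ler_pM2l // => h3.
rewrite ler_norml; lra.
Qed.

End Final.

Theorem mainTheorem3 (R : realType) (p q d : nat)
  (phi : 'I_p.+1 -> 'I_q.+1 -> 'rV[R]_d) (eta M : R) (theta_star : 'cV[R]_d)
  (mu_star : 'I_p.+1 -> R) (nu_star : 'I_q.+1 -> R) :
  (1 <= p)%N -> (1 <= q)%N -> 0 < eta ->
  sqnorm theta_star <= M ->
  is_QRE eta (Qlin phi theta_star) mu_star nu_star ->
  \rank (col_mx (Amat phi nu_star) (Bmat phi mu_star)) = d ->
  exists C : R, 0 < C /\
    forall delta : R, 0 < delta < 1 ->
    exists N0 : nat, forall N : nat, (N0 <= N)%N ->
      1 - delta <=
      Prob mu_star nu_star
        (fun s : {ffun 'I_N -> 'I_p.+1 * 'I_q.+1} =>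
           (forall a, 0 < muhat (R:=R) s a) /\ (forall b, 0 < nuhat (R:=R) s b) /\
           forall theta_hat : 'cV[R]_d,
             is_LS_minimizer phi eta (muhat (R:=R) s) (nuhat (R:=R) s) theta_hat ->
             frob2 (Qlin phi theta_hat) (Qlin phi theta_star) <=
             C * (((p.+1) ^ 2)%:R + ((q.+1) ^ 2)%:R
                  + (p.+1 + q.+1)%:R * ln (delta^-1)) / N%:R).
Proof.
move=> hp hq eta0 hM hQ hrk.
have [mu0 [nu0 [smu snu]]] := QRE_pos _ _ _ _ phi eta hQ.
have [tau [K [tau0 [K0 hdet]]]] := @det R p q d phi eta eta0 _ _ _ hQ hrk.
have w0 : forall x : 'I_p.+1 * 'I_q.+1, 0 <= mu_star x.1 * nu_star x.2.
  by move=> x; apply: mulr_ge0; apply: ltW.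
have w1s : \sum_(x : 'I_p.+1 * 'I_q.+1) mu_star x.1 * nu_star x.2 = 1.
  rewrite (@sumW R p q (fun x : 'I_p.+1 * 'I_q.+1 => mu_star x.1 * nu_star x.2)) /=. under eq_bigr do rewrite -mulr_sumr snu mulr1; exact: smu.
have mu1 : forall a, 0 <= mu_star a <= 1.
  move=> a; rewrite ltW //= -smu; apply: (@L_single R _ (fun a => mu_star a) a) => y; exact: ltW.
have nu1 : forall b, 0 <= nu_star b <= 1.
  move=> b; rewrite ltW //= -snu; apply: (@L_single R _ (fun b => nu_star b) b) => y; exact: ltW.
set Kn := ((p.+1 + q.+1) * 2)%N.
set Kc : R := Kn%:R.
have Kc1 : 1 <= Kc by rewrite ler1n.
have lK0 : 0 <= ln Kc by apply: ln_ge0.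
exists (8 * K * (ln Kc + 1) + 1).
split.
  apply: ltr_pwDr; first by [].
  by apply: mulr_ge0; [apply: mulr_ge0 => //| lra].
move=> delta /andP[d0 d1].
have Kc0 : 0 < Kc by lra.
have KD : 1 < Kc / delta by rewrite ltr_pdivlMr //; lra.
set L := ln (Kc / delta).
have L0 : 0 < L by apply: ln_gt0.
set tau' := Num.min tau 1.
have tau'0 : 0 < tau' by rewrite lt_min tau0 ltr01.
have tau'1 : tau' <= 1 by rewrite ge_min lexx orbT.
have tau'2 : tau' <= tau by rewrite ge_min lexx.
exists (Num.truncn (8 * L / tau' ^+ 2)).+1.
move=> N hN.
have N0 : (0 < N)%N by apply: leq_trans hN.
have Np : 0 < (N%:R : R) by rewrite ltr0n.
have hNr : 8 * L / tau' ^+ 2 < N%:R.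
  apply: lt_le_trans (truncnS_gt _) _; by rewrite ler_nat.
set t := Num.sqrt (8 * L / N%:R).
have t0 : 0 <= t by apply: sqrtr_ge0.
have t2 : t ^+ 2 = 8 * L / N%:R by rewrite sqr_sqrtr // divr_ge0 // ?ler0n //; lra.
have ttau : t <= tau'.
  have h : 8 * L / N%:R <= tau' ^+ 2.
    rewrite ler_pdivrMr // [tau' ^+ 2 * _]mulrC; apply: ltW; rewrite -ltr_pdivrMr ?exprn_gt0 //.
  have := ler_wsqrtr h; rewrite sqrtr_sqr ger0_norm //; exact: ltW.
pose I := (('I_p.+1 + 'I_q.+1) * bool)%type.
pose B := fun (i : I) (s : {ffun 'I_N -> 'I_p.+1 * 'I_q.+1}) =>
  N%:R * t < \sum_k @Yf R p q mu_star nu_star i (s k).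
apply: (le_trans _ (@Prob_union R p q mu_star nu_star w0 w1s N I B _ _)).
  suff : \sum_i Prob mu_star nu_star (B i) <= delta by lra.
  have hb : forall i, Prob mu_star nu_star (B i) <= delta / Kc.
    move=> i.
    apply: (le_trans (@chernoff R p q mu_star nu_star w0 w1s N (@Yf R p q mu_star nu_star i) t _ _ _)).
    - by move=> x; apply: Yf_bound.
    - exact: Yf_mean.
    - by rewrite t0 /=; lra.
    have -> : - (N%:R * t ^+ 2) / 8 = - L.
      rewrite t2; field; by rewrite pnatr_eq0 -lt0n.
    by rewrite expRN lnK ?posrE ?invf_div // (lt_trans ltr01 KD).
  apply: (le_trans (ler_sum _ (fun i _ => hb i))).
  rewrite sumr_const card_prod card_sum !card_ord card_bool -/Kn -mulr_natl -/Kc.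
  by rewrite mulrC divfK // gt_eqF.
move=> s hs.
have hmu : forall a, `|muhat s a - mu_star a| <= t.
  move=> a; apply: (@abs_from_sums R _ _ N N0).
    by have := hs (inl a, true); rewrite /B (@sumY1 R p q mu_star nu_star N s a true N0).
  by have := hs (inl a, false); rewrite /B (@sumY1 R p q mu_star nu_star N s a false N0).
have hnu : forall b, `|nuhat s b - nu_star b| <= t.
  move=> b; apply: (@abs_from_sums R _ _ N N0).
    by have := hs (inr b, true); rewrite /B (@sumY2 R p q mu_star nu_star N s b true N0).
  by have := hs (inr b, false); rewrite /B (@sumY2 R p q mu_star nu_star N s b false N0).
have htt : 0 <= t <= tau by rewrite t0 /=; apply: le_trans ttau tau'2.
have [hpos [hnpos hf]] := hdet t (muhat s) (nuhat s) htt hmu hnu.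
split => //; split => //.
move=> thh hmin; apply: (le_trans (hf _ hmin)).
have ld0 : 0 <= ln (delta^-1) by apply: ln_ge0; rewrite invf_ge1 // ltW.
have hL : L = ln Kc + ln (delta^-1) by rewrite /L lnM ?posrE ?invr_gt0.
set ld := ln (delta^-1).
set lK := ln Kc.
have ld0' : 0 <= ld := ld0.
have lK0' : 0 <= lK := lK0.
set X := ((p.+1 ^ 2)%:R + (q.+1 ^ 2)%:R + (p.+1 + q.+1)%:R * ld).
have hX : 1 + ld <= X.
  have P1 : (1 : R) <= (p.+1 ^ 2)%:R by rewrite ler1n expn_gt0.
  have Q0 : (0 : R) <= (q.+1 ^ 2)%:R by rewrite ler0n.
  have PQ1 : (1 : R) <= (p.+1 + q.+1)%:R by rewrite ler1n addn_gt0.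
  have : 0 <= ((p.+1 + q.+1)%:R - 1) * ld by apply: mulr_ge0 => //; lra.
  rewrite mulrBl mul1r /X; lra.
rewrite t2 hL -/lK -/ld mulrA ler_pM2r ?invr_gt0 //.
have e1 : 0 <= 8 * K * (1 + lK * ld).
  by apply: mulr_ge0; [apply: mulr_ge0 => //; lra | apply: addr_ge0 => //; apply: mulr_ge0].
have e2 : K * (8 * (lK + ld)) = 8 * K * (lK + 1) * (1 + ld) - 8 * K * (1 + lK * ld) by ring.
have e3 : 8 * K * (lK + 1) * (1 + ld) <= (8 * K * (lK + 1) + 1) * (1 + ld).
  set A := 8 * K * (lK + 1); rewrite [(A + 1) * _]mulrDl mul1r; lra.
have e4 : (8 * K * (lK + 1) + 1) * (1 + ld) <= (8 * K * (lK + 1) + 1) * X.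
  apply: ler_wpM2l => //; apply: addr_ge0 => //; apply: mulr_ge0; [apply: mulr_ge0 => //; lra | lra].
rewrite e2; lra.
Qed.
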